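(* Let $q$ be a prime power. Then: (i) $\ell_q(u,n)=u+q$ for all integers $n\ge1$ and $1\le u\le\min\{n,q\}$; (ii) $\ell_q(sq)=sq+q$ for $1\le s\le q$; (iii) $\ell_q(q+1,n)=2(q+1)$ for all $n\ge2$; (iv) if $q$ is even, $\ell_q(q+2,n)=2(q+1)$ for all $n\ge 2$; (v) $\ell_q(q^2-2q+1)=q^2-1$; (vi) $\ell_q(u)=q^2$ for $q^2-2q+2\le u\le q^2-q$; (vii) $\ell_q(u)=q^2+q$ for $q^2-q+1\le u\le q^2$.
   Context: In the affine plane $\mathrm{AG}(2,q)$, a transversal is a set $\mathcal{T}=\{L_1,\dots,L_{q+1}\}$ of $q+1$ pairwise non-parallel lines (one from each parallel class). For a set $\mathcal{F}$ of points of $\mathrm{AG}(2,q)$ put $\mathcal{F}(\mathcal{T})=\sum_{i=1}^{q+1}|\mathcal{F}\cap L_i|$. A projective $(u,n)$-arc in $\mathrm{AG}(2,q)$ is a set of $u$ points meeting every line in at most $n$ points. For integers $u,n\ge0$ such that a projective $(u,n)$-arc in $\mathrm{AG}(2,q)$ exists, $\ell_q(u,n)$ is the minimum, over all projective $(u,n)$-arcs $\mathcal{F}$ in $\mathrm{AG}(2,q)$, of $\max\{\mathcal{F}(\mathcal{T}):\mathcal{T}\text{ a transversal of }\mathrm{AG}(2,q)\}$. For $0\le u\le q^2$, $\ell_q(u)=\ell_q(u,q)$ (the same minimum over all sets of $u$ points). In parts (i),(iii),(iv) the value $u$ is assumed to be such that a projective $(u,n)$-arc in $\mathrm{AG}(2,q)$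 exists. *)

(* Defs.v *)
From HB Require Import structures.
From mathcomp Require Import all_boot all_order all_algebra.
Set Implicit Arguments. Unset Strict Implicit. Unset Printing Implicit Defensive.
Import GRing.Theory.
Local Open Scope ring_scope.

(* The affine plane AG(2,q) over a finite field F with #|F| = q:
   points are pairs (x,y) in F * F. *)
Definition point (F : finFieldType) := (F * F)%type.

Definition is_line (F : finFieldType) (L : {set point F}) : bool :=
  [exists a : F, exists b : F, exists c : F,
     ((a, b) != (0, 0)) && (L == [set p : point F | a * p.1 + b * p.2 == c])].

Definition parallel (F : finFieldType) (L1 L2 : {set point F}) : bool :=
  (L1 == L2) || (L1 :&: L2 == set0).

Definition transversal (F : finFieldType) (T : {set {set point F}}) : bool :=
  [&& [forall L in T, is_line L], #|T| == #|F|.+1 &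
      [forall L1 in T, forall L2 in T, (L1 != L2) ==> ~~ parallel L1 L2]].

Definition FT (F : finFieldType) (S : {set point F}) (T : {set {set point F}}) : nat :=
  (\sum_(L in T) #|S :&: L|)%N.

Definition proj_arc (F : finFieldType) (S : {set point F}) (u n : nat) : Prop :=
  #|S| = u /\ (forall L, is_line L -> #|S :&: L| <= n)%N.

Definition maxT (F : finFieldType) (S : {set point F}) : nat :=
  (\max_(T : {set {set point F}} | transversal T) FT S T)%N.

(* ell_is F u n v  <=>  ell_q(u,n) = v  (q = #|F|): v is attained by some
   (u,n)-arc and is a lower bound of maxT over all (u,n)-arcs. *)
Definition ell_is (F : finFieldType) (u n v : nat) : Prop :=
  (exists S : {set point F}, proj_arc S u n /\ maxT S = v) /\ (forall S : {set point F}, proj_arc S u n -> (v <= maxT S)%N).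

(* Main.v *)
Require Import Defs.
From mathcomp Require Import all_boot all_order all_algebra all_fingroup cyclic pgroup zify ring lra.
Set Implicit Arguments. Unset Strict Implicit. Unset Printing Implicit Defensive.
Import GRing.Theory FinRing.Theory.
Local Open Scope ring_scope.

Section Plane.
Variable F : finFieldType.
Local Notation q := #|F|.

Lemma cardF0 : (#|F|%:R : F) = 0.
Proof. have := @expg_cardG _ [set: F] (GRing.one F). rewrite inE => /(_ isT).
 rewrite cardsT zmodXgE => H. exact H. Qed.

Lemma q_gt1 : (1 < q)%N. Proof. exact: card_finNzRing_gt1. Qed.

Definition cof (d : option F) (p : point F) : F :=
  if d is Some m then p.2 - m * p.1 else p.1.
Definition Ln (d : option F) (c : F) : {set point F} := [set p | cof d p == c].
Definition M (S : {set point F}) d : nat := \max_(c : F) #|S :&: Ln d c|.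

Lemma inLn d c p : (p \in Ln d c) = (cof d p == c).
Proof. by rewrite inE. Qed.

Lemma cof_inj2 d e p p' : d != e -> cof d p = cof d p' -> cof e p = cof e p' -> p = p'.
Proof.
case: p p' => x y [x' y'].
case: d => [m|]; case: e => [m'|] //= dne E1 E2.
- have mm : m' - m != 0 by rewrite subr_eq0 eq_sym; apply: contraNneq dne => ->.
  have h : (m' - m) * (x - x') = 0.
    have -> : (m' - m) * (x - x') = (y - m * x - (y - m' * x)) - ((y' - m * x') - (y' - m' * x')) by ring.
    by rewrite E1 E2 subrr.
  move/eqP: h; rewrite mulf_eq0 (negbTE mm) /= subr_eq0 => /eqP hx.
  subst x'. have : y = y' by move: E1 => /eqP; rewrite -subr_eq0 => /eqP H; apply/eqP; rewrite -subr_eq0; rewrite -H; apply/eqP; ring.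
  by move->.
- subst x'. have : y = y' by move: E1 => /eqP; rewrite -subr_eq0 => /eqP H; apply/eqP; rewrite -subr_eq0; rewrite -H; apply/eqP; ring.
  by move->.
- subst x'. have : y = y' by move: E2 => /eqP; rewrite -subr_eq0 => /eqP H; apply/eqP; rewrite -subr_eq0; rewrite -H; apply/eqP; ring.
  by move->.
Qed.

Lemma Ln_meet d e c c' : d != e -> exists p, cof d p = c /\ cof e p = c'.
Proof.
case: d => [m|]; case: e => [m'|] //= dne.
- have mm : m - m' != 0 by rewrite subr_eq0; apply: contraNneq dne => ->.
  exists ((c' - c)/(m - m'), m * ((c' - c)/(m - m')) + c) => /=; split; first by ring.
  by field.
- by exists (c', m * c' + c) => /=; split; ring.
- by exists (c, m' * c + c') => /=; split; ring.
Qed.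

Lemma card_Ln d c : #|Ln d c| = q.
Proof.
case: d => [m|].
- have -> : Ln (Some m) c = (fun x => (x, m * x + c)) @: [set: F].
    apply/setP => p; rewrite inE; apply/eqP/imsetP => [<-|[x _ ->]] /=.
    + by exists p.1 => //; case: p => x y /=; congr pair; ring.
    + by ring.
  by rewrite card_imset ?cardsT // => x y [].
- have -> : Ln None c = (fun y => (c, y)) @: [set: F].
    apply/setP => p; rewrite inE; apply/eqP/imsetP => [<-|[x _ ->]] //=.
    by exists p.2 => //; case: p.
  by rewrite card_imset ?cardsT // => x y [].
Qed.

Lemma is_lineP L : is_line L <-> exists d c, L = Ln d c.
Proof.
split.
- move=> /existsP[a /existsP[b /existsP[c /andP[nz /eqP->]]]].
  have [b0|bn0] := eqVneq b 0.
  + subst b. have an0 : a != 0 by move: nz; rewrite xpair_eqE eqxx andbT.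
    exists None, (c / a); apply/setP => p; rewrite !inE /=.
    apply/eqP/eqP => h.
    * rewrite -h; field; exact an0.
    * have -> : c = (c / a) * a by field.
      rewrite -h; ring.
  + exists (Some (- a / b)), (c / b); apply/setP => p; rewrite !inE /=.
    apply/eqP/eqP => h.
    * rewrite -h; field; exact bn0.
    * have -> : c = (c / b) * b by field.
      rewrite -h; field; exact bn0.
- move=> [[m|] [c ->]]; apply/existsP.
  + exists (- m); apply/existsP; exists 1; apply/existsP; exists c.
    rewrite xpair_eqE oner_eq0 andbF /=; apply/eqP/setP => p; rewrite !inE /=.
    by rewrite mul1r mulNr addrC.
  + exists 1; apply/existsP; exists 0; apply/existsP; exists c.
    rewrite xpair_eqE oner_eq0 /=; apply/eqP/setP => p; rewrite !inE /=.
    by rewrite mul1r mul0r addr0.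
Qed.


Lemma Ln_inj d e c c' : d != e -> Ln d c != Ln e c'.
Proof.
move=> dne; apply/eqP => E.
have : (#|Ln d c| <= 1)%N.
  apply/card_le1_eqP => p p' Hp Hp'.
  have Hq := Hp; have Hq' := Hp'.
  rewrite E in Hq Hq'. rewrite !inLn in Hp Hp' Hq Hq'.
  apply: (cof_inj2 dne); by rewrite ?(eqP Hp) ?(eqP Hp') ?(eqP Hq) ?(eqP Hq').
by rewrite card_Ln leqNgt q_gt1.
Qed.

Lemma M_ge (S : {set point F}) d c : (#|S :&: Ln d c| <= M S d)%N.
Proof. exact: (@leq_bigmax_cond _ predT (fun c => #|S :&: Ln d c|)). Qed.

Lemma M_le (S : {set point F}) d k : (forall c, #|S :&: Ln d c| <= k)%N -> (M S d <= k)%N.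
Proof. by move=> H; apply/bigmax_leqP => c _; apply: H. Qed.

Definition cm (S : {set point F}) (d : option F) : F := [arg max_(c > (0 : F)%R) #|S :&: Ln d c|]%N.
Lemma M_cm (S : {set point F}) d : M S d = #|S :&: Ln d (cm S d)|.
Proof. exact: (bigmax_eq_arg ((0 : F)%R) (P := predT)). Qed.

Definition pdc (L : {set point F}) : option F * F :=
  odflt (None, 0) [pick dc : option F * F | L == Ln dc.1 dc.2].

Lemma pdcE L : is_line L -> L = Ln (pdc L).1 (pdc L).2.
Proof.
move=> /is_lineP [d [c E]]; rewrite /pdc; case: pickP => [dc /eqP //|].
by move=> /(_ (d, c)); rewrite /= E eqxx.
Qed.

Lemma maxT_eq (S : {set point F}) : maxT S = (\sum_d M S d)%N.
Proof.
apply/eqP; rewrite eqn_leq; apply/andP; split.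
- apply/bigmax_leqP => T /and3P[/forallP Hl _ /forallP Hp].
  have HL : forall L, L \in T -> L = Ln (pdc L).1 (pdc L).2.
    by move=> L LT; apply: pdcE; move: (Hl L); rewrite LT.
  have inj : {in T &, injective (fun L => (pdc L).1)}.
    move=> L1 L2 L1T L2T /= eqd; apply/eqP; apply/negPn/negP => ne.
    have ne' := ne.
    move: (Hp L1); rewrite L1T => /forallP /(_ L2); rewrite L2T ne' /= /parallel negb_or.
    case/andP=> _ /set0Pn [p]; rewrite inE (HL _ L1T) (HL _ L2T) !inLn eqd.
    case/andP => /eqP h1 /eqP h2; move/negP: ne; apply; apply/eqP.
    by rewrite (HL _ L1T) (HL _ L2T) eqd -h1 -h2.
  rewrite /FT (@leq_trans (\sum_(L in T) M S (pdc L).1)%N) //.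
    by apply: leq_sum => L LT; rewrite {1}(HL _ LT); apply: M_ge.
  rewrite -(big_imset _ inj) /= [X in (_ <= X)%N](bigID (fun d => d \in (fun L => (pdc L).1) @: T)) /=.
  exact: leq_addr.
- set T := (fun d => Ln d (cm S d)) @: [set: option F].
  have inj : {in [set: option F] &, injective (fun d => Ln d (cm S d))}.
    move=> d e _ _ E; apply/eqP; apply/negP => /negP ne.
    by move: (Ln_inj (cm S d) (cm S e) ne); rewrite E eqxx.
  have trT : Defs.transversal T.
    apply/and3P; split.
    + apply/forallP => L; apply/implyP => /imsetP [d _ ->]; apply/is_lineP; by exists d, (cm S d).
    + by rewrite card_in_imset // cardsT card_option.
    + apply/forallP => L1; apply/implyP => /imsetP [d _ ->].
      apply/forallP => L2; apply/implyP => /imsetP [e _ ->].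
      apply/implyP => ne; rewrite /parallel negb_or ne /=.
      have dne : d != e by apply: contraNneq ne => ->.
      have [p [h1 h2]] := Ln_meet (cm S d) (cm S e) dne.
      by apply/set0Pn; exists p; rewrite !inE h1 h2 !eqxx.
  rewrite /maxT; apply: (leq_trans _ (@leq_bigmax_cond _ (fun T => Defs.transversal T) (fun T => FT S T) T trT)).
  rewrite /FT big_imset //=; apply: eq_leq; apply: eq_big => // [d|d _]; [by rewrite inE | by rewrite M_cm].
Qed.


Lemma card_IL (S : {set point F}) d c : #|S :&: Ln d c| = (\sum_(p in S) (cof d p == c))%N.
Proof.
rewrite -sum1_card (eq_bigl (fun p => (p \in S) && (cof d p == c))); last first.
  by move=> p; rewrite !inE.
by rewrite big_mkcondr /=; apply: eq_bigr => p _; case: (_ == _).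
Qed.

Lemma sum_part (S : {set point F}) d : (\sum_c #|S :&: Ln d c|)%N = #|S|.
Proof.
under eq_bigr do rewrite card_IL.
rewrite exchange_big /= -sum1_card; apply: eq_bigr => p _.
rewrite (bigD1 (cof d p)) //= eqxx big1 // => c /negbTE.
by rewrite eq_sym => ->.
Qed.

Lemma pigeon (S : {set point F}) d : (#|S| <= q * M S d)%N.
Proof.
rewrite -(sum_part S d) -[X in (_ <= X * _)%N]sum1_card big_distrl /=.
by apply: leq_sum => c _; rewrite mul1n; apply: M_ge.
Qed.

Lemma one_dir x P : x != P -> (\sum_d (cof d x == cof d P))%N = 1%N.
Proof.
move=> xP.
pose d0 := if x.1 == P.1 then None else Some ((x.2 - P.2)/(x.1 - P.1)).
have E : forall d, (cof d x == cof d P) = (d == d0).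
  case=> [m|] /=; rewrite /d0; have [e1|e1] := eqVneq x.1 P.1 => //=.
  - apply/negbTE; apply: contra xP => /eqP h; apply/eqP.
    case: x P e1 h {d0} => x1 x2 [p1 p2] /= e1 h; subst x1; congr pair.
    exact: (addIr _ h).
  - have ne : x.1 - P.1 != 0 by rewrite subr_eq0.
    apply/eqP/eqP => [h|[->]]; last by field.
    congr Some; apply/eqP; rewrite eq_sym -[X in _ == X](mulfK ne); apply/eqP.
    have -> : m * (x.1 - P.1) = (x.2 - P.2) - ((x.2 - m * x.1) - (P.2 - m * P.1)) by ring.
    by rewrite h subrr subr0.
under eq_bigr do rewrite E.
rewrite (bigD1 d0) //= eqxx big1 // => d /negbTE ->; done.
Qed.

Lemma pointLB (S : {set point F}) P : P \in S -> (#|S| + q <= \sum_d M S d)%N.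
Proof.
move=> PS.
apply: (@leq_trans (\sum_d #|S :&: Ln d (cof d P)|)%N); last first.
  by apply: leq_sum => d _; apply: M_ge.
under eq_bigr do rewrite card_IL.
rewrite exchange_big /= (bigD1 P) //=.
under eq_bigr do rewrite eqxx.
rewrite sum1_card card_option.
rewrite (eq_bigr (fun _ => 1%N)); last by move=> x /andP[_ xP]; apply: one_dir.
rewrite sum1_card.
have -> : #|S| = (#|[pred x in S | x != P]|).+1.
  rewrite (cardD1 P) PS add1n; congr (_.+1); apply: eq_card => x; rewrite !inE andbC //.
by rewrite addSn addnC.
Qed.

Lemma arcP (S : {set point F}) u n : proj_arc S u n <-> #|S| = u /\ (forall d c, #|S :&: Ln d c| <= n)%N.
Proof.
split=> [[h1 h2]|[h1 h2]]; split=> //.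
- by move=> d c; apply: h2; apply/is_lineP; exists d, c.
- by move=> L /is_lineP [d [c ->]].
Qed.

Lemma Ln_sub (S : {set point F}) d c : Ln d c \subset S -> M S d = q.
Proof.
move=> sub; apply/eqP; rewrite eqn_leq; apply/andP; split.
  by apply: M_le => c'; rewrite -(card_Ln d c'); apply: subset_leq_card; apply: subsetIr.
by rewrite -(card_Ln d c) -(setIidPr sub); apply: M_ge.
Qed.

Lemma M_leq (S : {set point F}) d : (M S d <= q)%N.
Proof. by apply: M_le => c'; rewrite -(card_Ln d c'); apply: subset_leq_card; apply: subsetIr. Qed.


Lemma sumX0 i : (i < q.-1)%N -> \sum_(a : F) a ^+ i = 0.
Proof.
move=> iq; case: i iq => [|i] iq.
  by under eq_bigr do rewrite expr0; rewrite sumr_const cardT -cardE cardF0.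
have [g [gnz gi]] : exists g : F, g != 0 /\ g ^+ i.+1 != 1.
  case: (pickP (fun g : F => (g != 0) && (g ^+ i.+1 != 1))) => [g /andP[? ?]|H]; first by exists g.
  exfalso.
  have := @max_poly_roots _ ('X^(i.+1) - 1) (enum (predC1 (0:F))).
  rewrite size_Xn_sub_1 // enum_uniq -size_poly_eq0 size_Xn_sub_1 //= -cardE cardC1.
  move=> /(_ isT) H2.
  have H3 : all (root ('X^(i.+1) - 1)) (enum (predC1 (0:F))).
    apply/allP => g; rewrite mem_enum /= => gnz; rewrite rootE !hornerE.
    have := H g; rewrite /= (_ : (g != 0) = true) /=; last exact: gnz.
    by move/negbFE/eqP->; rewrite subrr.
  by move: (H2 H3 isT); rewrite ltnNge iq.
have E : \sum_(a : F) a ^+ i.+1 = g ^+ i.+1 * \sum_(a : F) a ^+ i.+1.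
  rewrite mulr_sumr (reindex_inj (mulfI gnz)) /=; apply: eq_bigr => a _; by rewrite exprMn.
have : (g ^+ i.+1 - 1) * \sum_(a : F) a ^+ i.+1 = 0 by rewrite mulrBl -E mul1r subrr.
by move/eqP; rewrite mulf_eq0 subr_eq0 (negbTE gi) /= => /eqP.
Qed.

Definition evp (s : seq (F * (nat * nat))) (a b : F) : F :=
  \sum_(t <- s) t.1 * a ^+ t.2.1 * b ^+ t.2.2.

Definition mulp (s : seq (F * (nat * nat))) (al be : F) :=
  [seq (t.1 * al, (t.2.1.+1, t.2.2)) | t <- s] ++
  [seq (t.1 * be, (t.2.1, t.2.2.+1)) | t <- s] ++ [seq (- t.1, t.2) | t <- s].

Lemma evp_mul s al be a b : evp (mulp s al be) a b = evp s a b * (a * al + b * be - 1).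
Proof.
rewrite /evp /mulp !big_cat !big_map /= mulr_suml -!big_split /=.
by apply: eq_bigr => t _; rewrite !exprS; ring.
Qed.

Lemma prod_evp (r : seq (point F)) (O : point F) : exists s,
  (forall a b, \prod_(p <- r) (a * (p.1 - O.1) + b * (p.2 - O.2) - 1) = evp s a b) /\
  all (fun t => t.2.1 + t.2.2 <= size r)%N s.
Proof.
elim: r => [|p r [s [E A]]].
  exists [:: ((1:F), (0%N, 0%N))]; split => // a b.
  by rewrite big_nil /evp big_cons big_nil /= !expr0 !mulr1 addr0.
exists (mulp s (p.1 - O.1) (p.2 - O.2)); split.
  by move=> a b; rewrite big_cons E evp_mul mulrC.
rewrite /mulp !all_cat !all_map; apply/and3P; split; apply: sub_all A => t /=; 
  move=> h /=; lia.
Qed.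

Lemma evp_sum0 s : all (fun t => t.2.1 + t.2.2 < 2 * q.-1)%N s ->
  \sum_(a : F) \sum_(b : F) evp s a b = 0.
Proof.
move=> A; rewrite /evp.
under eq_bigr do rewrite exchange_big.
rewrite exchange_big /= big_seq big1 // => t ts.
have : (t.2.1 + t.2.2 < 2 * q.-1)%N by move/allP: A => /(_ t ts).
move=> h.
under eq_bigr do rewrite -mulr_sumr.
rewrite -mulr_suml.
have [h1|h1] := ltnP t.2.1 q.-1.
  by rewrite -mulr_sumr sumX0 // mulr0 mul0r.
have h2 : (t.2.2 < q.-1)%N by lia.
by rewrite sumX0 // mulr0.
Qed.


Lemma jamison (C : {set point F}) O : O \in C -> (#|C| <= 2 * q.-1)%N ->
  exists d c, Ln d c :&: C = set0.
Proof.
move=> OC cC.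
case: (boolP [exists d, exists c, Ln d c :&: C == set0]) => [/existsP[d /existsP[c /eqP E]]|H].
  by exists d, c.
exfalso.
have HB : forall d c, exists p, p \in Ln d c /\ p \in C.
  move=> d c; move: H; rewrite negb_exists => /forallP /(_ d).
  rewrite negb_exists => /forallP /(_ c) /set0Pn [p].
  by rewrite inE => /andP[? ?]; exists p.
pose r := enum (C :\ O).
have [s [E A]] := prod_evp r O.
have sr : size r = #|C|.-1 by rewrite /r -cardE (cardsD1 O C) OC.
have C1 : (0 < #|C|)%N by rewrite card_gt0; apply/set0Pn; exists O.
have A' : all (fun t => t.2.1 + t.2.2 < 2 * q.-1)%N s.
  apply: sub_all A => t /= h; move: h cC C1; rewrite sr; move: (#|C|) (q.-1) => x y; lia.
have Z : forall a b, (a, b) != (0, 0) -> evp s a b = 0.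
  move=> a b ab; rewrite -E; apply/eqP; rewrite prodf_seq_eq0; apply/hasP.
  have [p [pC pv]] : exists p, p \in C /\ a * (p.1 - O.1) + b * (p.2 - O.2) - 1 = 0.
    have [b0|bn0] := eqVneq b 0.
    - subst b. have an0 : a != 0 by move: ab; rewrite xpair_eqE eqxx andbT.
      have [p [pL pC]] := HB None (O.1 + a^-1).
      exists p; split=> //; move: pL; rewrite inLn /= => /eqP ->; field; exact an0.
    - have [p [pL pC]] := HB (Some (-a/b)) ((1 + a * O.1 + b * O.2)/b).
      exists p; split=> //; move: pL; rewrite inLn /= => /eqP h.
      have -> : a * (p.1 - O.1) + b * (p.2 - O.2) - 1 = b * (p.2 - - a / b * p.1) - (1 + a * O.1 + b * O.2).
        field; exact bn0.
      rewrite h; field; exact bn0.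
  exists p; last by rewrite pv eqxx.
  rewrite /r mem_enum !inE pC andbT.
  apply/eqP => pO; move: pv; rewrite pO !subrr !mulr0 !add0r => /eqP.
  by rewrite oppr_eq0 oner_eq0.
have S0 := evp_sum0 A'.
have : \sum_(a:F) \sum_(b:F) evp s a b = evp s 0 0.
  rewrite (bigD1 0) //= [X in _ + X]big1 => [|a an0]; last first.
    by apply: big1 => b _; apply: Z; rewrite xpair_eqE negb_and an0.
  rewrite addr0 (bigD1 0) //= [X in _ + X]big1 => [|b bn0]; last by apply: Z; rewrite xpair_eqE negb_and bn0 orbT.
  by rewrite !addr0.
rewrite S0 -E => /esym /eqP; rewrite prodf_seq_eq0 => /hasP [p _] /=.
by rewrite !mul0r !add0r oppr_eq0 oner_eq0.
Qed.


Lemma two0 : ~~ odd #|F| -> (2%:R : F) = 0.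
Proof.
move=> ev.
have [x _ ox] := @Cauchy _ 2 [set: F] (isT : prime 2) (etrans (dvdn2 _) (etrans (congr1 (fun n => ~~ odd n) (cardsT F)) ev)).
have h1 := expg_order x. rewrite ox zmodXgE in h1.
have xn0 : x != 0.
  apply/eqP => x0. move: ox. rewrite x0. rewrite -zmod1gE order1. by [].
have : x * 2%:R = 0 by rewrite mulr_natr; exact h1.
by move/eqP; rewrite mulf_eq0 (negbTE xn0) /= => /eqP.
Qed.

Lemma quad_le2 (a b c : F) : a != 0 -> (#|[set x : F | (a * x ^+ 2 + b * x + c == 0)%R]| <= 2)%N.
Proof.
move=> an0; set R := [set x | _].
case: (set_0Vmem R) => [->|[r rR]]; first by rewrite cards0.
apply: (@leq_trans #|[set r; - b / a - r]|); last by rewrite cards2; case: (_ != _).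
apply: subset_leq_card; apply/subsetP => x; rewrite !inE => /eqP hx.
move: rR; rewrite inE => /eqP hr.
have : (x - r) * (a * (x + r) + b) = 0.
  have -> : (x - r) * (a * (x + r) + b) = (a * x ^+ 2 + b * x + c) - (a * r ^+ 2 + b * r + c) by ring.
  by rewrite hx hr subrr.
move/eqP; rewrite mulf_eq0 subr_eq0 => /orP [->//|h].
apply/orP; right; apply/eqP; apply/eqP; rewrite -subr_eq0.
have -> : x - (- b / a - r) = (a * (x + r) + b) / a by field; exact an0.
by rewrite (eqP h) mul0r.
Qed.

Lemma exists_sub (T : finType) (A : {set T}) k : (k <= #|A|)%N ->
  exists2 B : {set T}, B \subset A & #|B| = k.
Proof.
move=> kA; exists [set x in take k (enum A)].
  by apply/subsetP => x; rewrite inE => /mem_take; rewrite mem_enum.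
rewrite cardsE; have /card_uniqP -> := take_uniq k (enum_uniq (mem A)).
by rewrite size_takel // -cardE.
Qed.

Lemma c0_exists : exists c0 : F, forall z, z ^+ 2 - z != c0.
Proof.
pose f := fun z : F => z ^+ 2 - z.
have cf : (#|f @: [set: F]| < q)%N.
  apply: (@leq_ltn_trans #|[set~ (1:F)]|); last by rewrite cardsC1 ltn_predL (ltnW q_gt1).
  rewrite (_ : _ @: [set: F] = f @: [set~ 1]) ?leq_imset_card //.
  apply/setP => y; apply/imsetP/imsetP => [[z _ ->]|[z _ ->]]; last by exists z.
  case: (eqVneq z 1) => [->|z1]; last by exists z; rewrite ?inE.
  exists 0; first by rewrite !inE eq_sym oner_neq0.
  by rewrite /f expr1n subrr expr2 mulr0 subr0.
case: (pickP (fun c => c \notin f @: [set: F])) => [c0 Hc|H].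
  exists c0 => z; apply: contraNneq Hc => <-; by apply/imsetP; exists z.
have : f @: [set: F] = [set: F] by apply/setP => c; rewrite inE; move: (H c) => /= /negbFE.
by move=> E; move: cf; rewrite E cardsT ltnn.
Qed.

Section Conic.
Variable c0 : F.
Hypothesis hc0 : forall z : F, z ^+ 2 - z != c0.

Definition Nf (p : point F) := p.1 ^+ 2 - p.1 * p.2 - c0 * p.2 ^+ 2.

Lemma Nf_aniso (v : point F) : Nf v = 0 -> v = (0, 0).
Proof.
case: v => a b /=; rewrite /Nf /= => h.
have [b0|bn0] := eqVneq b 0.
  subst b; move: h; rewrite mulr0 expr0n /= mulr0 !subr0 => /eqP; rewrite expf_eq0 /= => /eqP -> //.
exfalso; move: (hc0 (a / b)) => /negP; apply; apply/eqP.
apply/eqP; rewrite -subr_eq0; apply/eqP.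
have -> : (a / b) ^+ 2 - a / b - c0 = (a ^+ 2 - a * b - c0 * b ^+ 2) / b ^+ 2 by field; exact bn0.
by rewrite h mul0r.
Qed.

Lemma c0_neq0 : c0 != 0.
Proof.
apply/eqP => h; have := Nf_aniso (v := (0, 1)); rewrite /Nf /= h.
rewrite expr2 !mul0r !subr0 => /(_ erefl) [] /eqP; by rewrite oner_eq0.
Qed.

Definition Q : {set point F} := [set p | Nf p == 1].

Lemma conic_line d c : (#|Q :&: Ln d c| <= 2)%N.
Proof.
pose par := fun p : point F => if d is Some _ then p.1 else p.2.
have inj : {in Q :&: Ln d c &, injective par}.
  move=> p p'; rewrite !inE => /andP[_ /eqP h1] /andP[_ /eqP h2] hp.
  rewrite /par in hp; case: d h1 h2 hp {par} => [m|] /= h1 h2 hp; case: p p' h1 h2 hp => x y [x' y'] /= h1 h2 hp.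
  - subst x'; congr pair; by move: h1 h2 => <- /eqP; rewrite subr_eq => /eqP ->; rewrite subrK.
  - by rewrite h1 h2 hp.
rewrite -(card_in_imset inj).
case: d @par inj => [m|] par inj.
- have A0 : 1 - m - c0 * m ^+ 2 != 0.
    apply/eqP => h; have := Nf_aniso (v := (1, m)); rewrite /Nf /= expr1n mul1r h => /(_ erefl) [] /eqP.
    by rewrite oner_eq0.
  apply: (leq_trans _ (quad_le2 (- c - 2%:R * c0 * m * c) (- c0 * c ^+ 2 - 1) A0)).
  apply: subset_leq_card; apply/subsetP => z /imsetP [p]; rewrite !inE /par => /andP [/eqP hN /eqP hL] ->.
  case: p hN hL => x y /= hN hL; apply/eqP.
  have hy : y = m * x + c by rewrite -hL; ring.
  subst y; rewrite /Nf /= in hN.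
  transitivity (x ^+ 2 - x * (m * x + c) - c0 * (m * x + c) ^+ 2 - 1); first ring.
  by rewrite hN subrr.
- have A0 : - c0 != 0 by rewrite oppr_eq0 c0_neq0.
  apply: (leq_trans _ (quad_le2 (- c) (c ^+ 2 - 1) A0)).
  apply: subset_leq_card; apply/subsetP => z /imsetP [p]; rewrite !inE /par => /andP [/eqP hN /eqP hL] ->.
  case: p hN hL => x y /= hN hL; apply/eqP.
  subst x; rewrite /Nf /= in hN.
  transitivity (c ^+ 2 - c * y - c0 * y ^+ 2 - 1); first ring.
  by rewrite hN subrr.
Qed.

Definition dvec (d : option F) : point F := if d is Some t then (1, t) else (0, 1).
Definition lam d := - (2%:R * (dvec d).1 - (dvec d).2) / Nf (dvec d).
Definition phi d : point F := (1 + lam d * (dvec d).1, lam d * (dvec d).2).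

Lemma Nf_dvec d : Nf (dvec d) != 0.
Proof.
apply/eqP => /Nf_aniso; case: d => [t|] /= [] /eqP; by rewrite ?oner_eq0 // eq_sym oner_eq0.
Qed.

Lemma lam0 d : lam d = 0 -> 2%:R * (dvec d).1 - (dvec d).2 = 0.
Proof.
move/eqP; rewrite /lam mulf_eq0 invr_eq0 (negbTE (Nf_dvec d)) orbF oppr_eq0 => /eqP //.
Qed.

Lemma phi_Q d : phi d \in Q.
Proof.
have key : forall a b l, Nf (1 + l * a, l * b) = 1 + l * (2%:R * a - b) + l ^+ 2 * Nf (a, b).
  by move=> a b l; rewrite /Nf /=; ring.
rewrite inE /phi /lam key; have := Nf_dvec d; case: (dvec d) => a b /= Nn.
by apply/eqP; field; exact Nn.
Qed.

Lemma phi_inj : injective phi.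
Proof.
move=> d e; rewrite /phi.
have l0 := @lam0 d; have l0' := @lam0 e.
case: d e l0 l0' => [t|] [s|] //= l0 l0' [] h1 h2.
- move/addrI: h1; rewrite !mulr1 => h1; rewrite h1 in h2 l0.
  have [z|nz] := eqVneq (lam (Some s)) 0.
    move: (l0 z) (l0' z); rewrite mulr1 => /eqP; rewrite subr_eq0 => /eqP <- /eqP.
    by rewrite subr_eq0 => /eqP <-.
  by rewrite (mulfI nz h2).
- exfalso; move/addrI: h1; rewrite mulr1 mulr0 => h1; rewrite h1 mul0r mulr1 in h2.
  by move: (l0' (esym h2)); rewrite mulr0 sub0r => /eqP; rewrite oppr_eq0 oner_eq0.
- exfalso; move/addrI: h1; rewrite mulr1 mulr0 => h1; rewrite -h1 mul0r mulr1 in h2.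
  by move: (l0 h2); rewrite mulr0 sub0r => /eqP; rewrite oppr_eq0 oner_eq0.
Qed.

Lemma card_Q : (q.+1 <= #|Q|)%N.
Proof.
rewrite -card_option -cardsT -(card_imset _ phi_inj).
apply: subset_leq_card; apply/subsetP => p /imsetP [d _ ->]; exact: phi_Q.
Qed.

Lemma conic_line0 d : (2%:R : F) = 0 -> (#|Q :&: Ln d 0%R| <= 1)%N.
Proof.
move=> two; have sq : forall x x' : F, x ^+ 2 = x' ^+ 2 -> x = x'.
  move=> x x' h; apply/eqP; rewrite -subr_eq0.
  have : (x - x') ^+ 2 = 0.
    have -> : (x - x') ^+ 2 = x ^+ 2 - x' ^+ 2 + 2%:R * (x' ^+ 2 - x * x') by ring.
    by rewrite h two mul0r subrr addr0.
  by move/eqP; rewrite expf_eq0.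
apply/card_le1_eqP => p p'; rewrite !inE => /andP[/eqP hN /eqP hL] /andP[/eqP hN' /eqP hL'].
have aniso := Nf_aniso.
case: d hL hL' => [m|] /=; case: p p' hN hN' => x y [x' y'] /= hN hN' hL hL'.
- have hy : y = m * x by rewrite -[y]subr0 -hL; ring.
  have hy' : y' = m * x' by rewrite -[y']subr0 -hL'; ring.
  subst y y'.
  have A0 : 1 - m - c0 * m ^+ 2 != 0.
    apply/eqP => h; have := aniso (1, m); rewrite /Nf /= expr1n mul1r h => /(_ erefl) [] /eqP.
    by rewrite oner_eq0.
  have e1 : x ^+ 2 * (1 - m - c0 * m ^+ 2) = 1 by rewrite -[RHS]hN /Nf /=; ring.
  have e2 : x' ^+ 2 * (1 - m - c0 * m ^+ 2) = 1 by rewrite -[RHS]hN' /Nf /=; ring.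
  by have := mulIf A0 (etrans e1 (esym e2)) => /sq ->.
- subst x x'.
  have A0 : - c0 != 0 by rewrite oppr_eq0 c0_neq0.
  have e1 : y ^+ 2 * (- c0) = 1 by rewrite -[RHS]hN /Nf /=; ring.
  have e2 : y' ^+ 2 * (- c0) = 1 by rewrite -[RHS]hN' /Nf /=; ring.
  by have := mulIf A0 (etrans e1 (esym e2)) => /sq ->.
Qed.

End Conic.


Lemma sum_le (S : {set point F}) k : (forall d, M S d <= k)%N -> (\sum_d M S d <= q.+1 * k)%N.
Proof.
move=> H; apply: (@leq_trans (\sum_(d : option F) k)); first exact: leq_sum.
by rewrite sum_nat_const card_option.
Qed.

Lemma sum_ge (S : {set point F}) k : (forall d, k <= M S d)%N -> (q.+1 * k <= \sum_d M S d)%N.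
Proof.
move=> H; apply: (@leq_trans (\sum_(d : option F) k)); last exact: leq_sum.
by rewrite sum_nat_const card_option.
Qed.

Lemma sum_split_le (S : {set point F}) d0 a b : (M S d0 <= a)%N ->
  (forall d, d != d0 -> M S d <= b)%N -> (\sum_d M S d <= a + q * b)%N.
Proof.
move=> h1 h2; rewrite (bigD1 d0) //=; apply: leq_add => //.
apply: (@leq_trans (\sum_(d | d != d0) b)); first exact: leq_sum.
by rewrite sum_nat_const cardC1 card_option.
Qed.

Lemma sum_split_ge (S : {set point F}) d0 a b : (a <= M S d0)%N ->
  (forall d, b <= M S d)%N -> (a + q * b <= \sum_d M S d)%N.
Proof.
move=> h1 h2; rewrite (bigD1 d0) //=; apply: leq_add => //.
apply: (@leq_trans (\sum_(d | d != d0) b)); last exact: leq_sum.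
by rewrite sum_nat_const cardC1 card_option.
Qed.

Lemma pig_ge (S : {set point F}) d k : (q * k < #|S|)%N -> (k < M S d)%N.
Proof.
move=> h; rewrite ltnNge; apply/negP => hM.
have := pigeon S d; rewrite leqNgt; move/negP; apply.
by apply: (leq_ltn_trans _ h); rewrite leq_mul2l hM orbT.
Qed.

Lemma proj_bound (X : {set point F}) (A : {set F}) d c : d != Some 0 ->
  (forall p, p \in X -> p.2 \in A) -> (#|X :&: Ln d c| <= #|A|)%N.
Proof.
move=> dn H.
have inj : {in X :&: Ln d c &, injective (@snd F F)}.
  move=> p p'; rewrite !inE => /andP[_ /eqP h1] /andP[_ /eqP h2] e.
  apply: (cof_inj2 dn); first by rewrite h1 h2.
  by rewrite /= e !mul0r.
rewrite -(card_in_imset inj); apply: subset_leq_card; apply/subsetP => y /imsetP[p].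
by rewrite inE => /andP[pX _] ->; apply: H.
Qed.

Lemma miss_le (S : {set point F}) d c p : p \in Ln d c -> p \notin S -> (#|S :&: Ln d c| <= q.-1)%N.
Proof.
move=> pL pS.
apply: (@leq_trans #|Ln d c :\ p|).
  apply: subset_leq_card; apply/subsetP => x; rewrite !inE => /andP[xS ->]; rewrite andbT.
  by apply: contraNneq pS => <-.
by have := cardsD1 p (Ln d c); rewrite pL card_Ln add1n => ->.
Qed.

Lemma exists_S u : (u <= q * q)%N -> exists S : {set point F}, #|S| = u.
Proof.
move=> h; have [|B _ hB] := @exists_sub _ [set: point F] u; last by exists B.
by rewrite cardsT card_prod.
Qed.

Lemma nonempty_of (S : {set point F}) : (0 < #|S|)%N -> exists P, P \in S.
Proof. by move/card_gt0P. Qed.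


Lemma lb_point (S : {set point F}) u : #|S| = u -> (1 <= u)%N -> (u + q <= maxT S)%N.
Proof.
move=> hS hu; have [P PS] : exists P, P \in S by apply/card_gt0P; rewrite hS.
by rewrite maxT_eq -hS; apply: pointLB PS.
Qed.

Lemma part1 n u : (1 <= n)%N -> (1 <= u <= minn n q)%N -> ell_is F u n (u + q).
Proof.
move=> hn /andP[hu1 hu2].
have hu : (u <= #|[set: F]|)%N by rewrite cardsT; move: hu2; rewrite leq_min => /andP[].
have [A _ hA] := exists_sub hu.
pose S := (fun x : F => (x, 0 : F)) @: A.
have cS : #|S| = u by rewrite card_imset // => x y [].
split; last by move=> S' [hS' _]; apply: lb_point hS' hu1.
exists S; split.
  apply/arcP; split=> // d c; apply: (leq_trans (subset_leq_card (subsetIl _ _))).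
  by rewrite cS; move: hu2; rewrite leq_min => /andP[].
apply/eqP; rewrite eqn_leq (lb_point cS hu1) andbT maxT_eq.
rewrite -[X in (_ <= _ + X)%N]muln1; apply: (sum_split_le (d0 := Some 0)).
  by apply: M_le => c; rewrite -cS; apply: subset_leq_card; apply: subsetIl.
move=> d dn; apply: M_le => c; rewrite -(cards1 (0:F)).
by apply: proj_bound => // p /imsetP [x _ ->]; rewrite inE.
Qed.

Lemma part2 s : (1 <= s <= q)%N -> ell_is F (s * q) q (s * q + q).
Proof.
move=> /andP[hs1 hs2].
have hs : (s <= #|[set: F]|)%N by rewrite cardsT.
have [A _ hA] := exists_sub hs.
pose S := setX [set: F] A.
have cS : #|S| = (s * q)%N by rewrite cardsX cardsT hA mulnC.
have sq1 : (1 <= s * q)%N by rewrite muln_gt0 hs1 (ltnW q_gt1).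
split; last by move=> S' [hS' _]; apply: lb_point hS' sq1.
exists S; split.
  apply/arcP; split=> // d c; rewrite -(card_Ln d c).
  exact: subset_leq_card (subsetIr _ _).
apply/eqP; rewrite eqn_leq (lb_point cS sq1) andbT maxT_eq.
rewrite [X in (_ <= X)%N]addnC mulnC; apply: (sum_split_le (d0 := Some 0)); first exact: M_leq.
move=> d dn; apply: M_le => c; rewrite -hA.
by apply: proj_bound => // p; rewrite inE => /andP[].
Qed.


Lemma lb_pig (S : {set point F}) k : (q * k < #|S|)%N -> (q.+1 * k.+1 <= maxT S)%N.
Proof. by move=> h; rewrite maxT_eq; apply: sum_ge => d; apply: pig_ge h. Qed.

Lemma part3 n : (2 <= n)%N -> ell_is F q.+1 n (2 * q.+1).
Proof.
move=> hn.
have [c0 hc0] := c0_exists.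
have [S SQ cS] := exists_sub (card_Q hc0).
have lbq : forall S' : {set point F}, #|S'| = q.+1 -> (2 * q.+1 <= maxT S')%N.
  by move=> S' h; rewrite mulnC; apply: lb_pig; rewrite h muln1.
split; last by move=> S' [hS' _]; apply: lbq.
have l2 : forall d c, (#|S :&: Ln d c| <= 2)%N.
  move=> d c; apply: leq_trans (conic_line hc0 d c).
  by apply: subset_leq_card; apply: setSI.
exists S; split.
  by apply/arcP; split=> // d c; apply: leq_trans (l2 d c) hn.
apply/eqP; rewrite eqn_leq lbq // andbT maxT_eq mulnC.
by apply: sum_le => d; apply: M_le.
Qed.

Lemma part4 n : ~~ odd q -> (2 <= n)%N -> ell_is F q.+2 n (2 * q.+1).
Proof.
move=> ev hn.
have two := two0 ev.
have [c0 hc0] := c0_exists.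
have [S SQ cS] := exists_sub (card_Q hc0).
pose H := (0, 0) |: S.
have OQ : (0, 0) \notin Q c0.
  rewrite inE /Nf /=; apply/eqP => h; have : (0:F) = 1 by rewrite -h; ring.
  by move/eqP; rewrite eq_sym oner_eq0.
have cH : #|H| = q.+2.
  by rewrite cardsU1 cS; have -> : ((0, 0) \notin S) by apply: contra OQ; apply: (subsetP SQ).
have lbq : forall S' : {set point F}, #|S'| = q.+2 -> (2 * q.+1 <= maxT S')%N.
  by move=> S' h; rewrite mulnC; apply: lb_pig; rewrite h muln1.
split; last by move=> S' [hS' _]; apply: lbq.
have l2 : forall d c, (#|H :&: Ln d c| <= 2)%N.
  move=> d c; have [c0'|cn0] := eqVneq c 0.
  - subst c; apply: (@leq_trans #|(0, 0) |: (Q c0 :&: Ln d 0)|).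
      apply: subset_leq_card; apply/subsetP => p; rewrite !inE => /andP[/orP[->//|pS] ->].
      by have := subsetP SQ _ pS; rewrite inE => ->; rewrite orbT.
    rewrite (cardsU1 (0,0) (Q c0 :&: Ln d 0)); apply: (@leq_add _ _ 1 1); first by case: (_ \notin _).
    exact: conic_line0.
  - apply: (@leq_trans #|Q c0 :&: Ln d c|); last exact: conic_line.
    apply: subset_leq_card; apply/subsetP => p; rewrite !inE => /andP[/orP[/eqP pO|pS] pL].
      by move: pL cn0; rewrite pO; case: d => [m|] /=; rewrite ?mulr0 ?subr0 => /eqP <-; rewrite eqxx.
    by move: (subsetP SQ _ pS); rewrite inE => ->; rewrite pL.
exists H; split.
  by apply/arcP; split=> // d c; apply: leq_trans (l2 d c) hn.
apply/eqP; rewrite eqn_leq lbq // andbT maxT_eq mulnC.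
by apply: sum_le => d; apply: M_le.
Qed.


Lemma arc_q (S : {set point F}) u : #|S| = u -> proj_arc S u q.
Proof.
move=> h; apply/arcP; split=> // d c; rewrite -(card_Ln d c).
exact: subset_leq_card (subsetIr _ _).
Qed.

Lemma q_k : exists k, q = k.+2.
Proof. by exists q.-2; have := q_gt1; case: #|F| => [|[|k]]. Qed.

Lemma part5 : ell_is F (q * q - 2 * q + 1) q (q * q - 1).
Proof.
have [k qk] := q_k.
pose S := setX (~: [set (0:F)]) (~: [set (0:F)]).
have cS : #|S| = (q * q - 2 * q + 1)%N.
  by rewrite cardsX !cardsC1 qk /=; nia.
have lb : forall S' : {set point F}, #|S'| = (q * q - 2 * q + 1)%N -> (q * q - 1 <= maxT S')%N.
  move=> S' h; apply: (@leq_trans (q.+1 * k.+1)); first by rewrite qk; nia.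
  by apply: lb_pig; rewrite h qk; nia.
split; last by move=> S' [hS' _]; apply: lb.
exists S; split; first exact: arc_q.
apply/eqP; rewrite eqn_leq lb // andbT maxT_eq.
apply: (@leq_trans (q.+1 * q.-1)); last by rewrite qk; nia.
apply: sum_le => d; apply: M_le => c.
have [dn|dn] := eqVneq d (Some 0).
  subst d; apply: (miss_le (p := (0, c))); first by rewrite inLn /= mulr0 subr0.
  by rewrite !inE eqxx.
have [p [h1 h2]] := Ln_meet c 0 dn.
apply: (miss_le (p := p)); first by rewrite inLn h1.
move: h2; case: p {h1} => x y /=; rewrite mul0r subr0 => ->; by rewrite !inE eqxx andbF.
Qed.

Lemma lb6 u (S : {set point F}) : (q * q - 2 * q + 2 <= u <= q * q - q)%N ->
  #|S| = u -> (q * q <= maxT S)%N.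
Proof.
have [k qk] := q_k.
move=> /andP[hu1 hu2] h.
have hC : #|~: S| = (q * q - u)%N.
  have := cardsC S; rewrite card_prod h => <-; lia.
have [O OC] : exists O, O \in ~: S.
  apply/card_gt0P; rewrite hC; move: hu2; rewrite qk; nia.
have hCle : (#|~: S| <= 2 * q.-1)%N by rewrite hC; move: hu1; rewrite qk /=; nia.
have [d0 [c E]] := jamison OC hCle.
have sub : Ln d0 c \subset S.
  apply/subsetP => x xL; apply/negPn/negP => xn.
  have : x \in Ln d0 c :&: ~: S by rewrite in_setI xL in_setC xn.
  by rewrite E inE.
rewrite maxT_eq; apply: (@leq_trans (q + q * q.-1)); first by rewrite qk; nia.
apply: (sum_split_ge (d0 := d0)); first by rewrite (Ln_sub sub).
move=> d; have := @pig_ge S d q.-2; rewrite h qk /=; move=> H; apply: H; nia.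
Qed.

Lemma part6 u : (q * q - 2 * q + 2 <= u <= q * q - q)%N -> ell_is F u q (q * q).
Proof.
have [k qk] := q_k.
move=> /andP[hu1 hu2].
have hX : (u <= #|setX (~: [set (0:F)%R]) [set: F]|)%N.
  by rewrite cardsX cardsC1 cardsT; move: hu2; rewrite qk /=; nia.
have [S SX cS] := exists_sub hX.
split.
  exists S; split; first exact: arc_q.
  apply/eqP; rewrite eqn_leq; apply/andP; split; last first.
    by apply: (lb6 (u := u)); rewrite ?hu1 ?hu2.
  rewrite maxT_eq; apply: (@leq_trans (q + q * q.-1)); last by rewrite qk; nia.
  apply: (sum_split_le (d0 := None)); first exact: M_leq.
  case=> [m|] // _; apply: M_le => c.
  apply: (miss_le (p := (0, c))); first by rewrite inLn /= mulr0 subr0.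
  by apply: contraTN isT => /(subsetP SX); rewrite !inE eqxx.
by move=> S' [hS' _]; apply: (lb6 (u := u)); rewrite ?hu1 ?hu2.
Qed.

Lemma part7 u : (q * q - q + 1 <= u <= q * q)%N -> ell_is F u q (q * q + q).
Proof.
have [k qk] := q_k.
move=> /andP[hu1 hu2].
have lb : forall S' : {set point F}, #|S'| = u -> (q * q + q <= maxT S')%N.
  move=> S' h; apply: (@leq_trans (q.+1 * q.-1.+1)); first by rewrite qk; nia.
  by apply: lb_pig; rewrite h qk; move: hu1; rewrite qk; nia.
split; last by move=> S' [hS' _]; apply: lb.
have [S cS] := exists_S hu2.
exists S; split; first exact: arc_q.
apply/eqP; rewrite eqn_leq lb // andbT maxT_eq.
apply: (@leq_trans (q.+1 * q)); last by rewrite qk; nia.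
by apply: sum_le => d; apply: M_leq.
Qed.

End Plane.

Local Close Scope ring_scope.

Theorem theorem4p4 (F : finFieldType) :
  let q := #|F| in
  (* (i) *)
  (forall n u : nat, 1 <= n -> 1 <= u <= minn n q ->
     (exists S : {set point F}, proj_arc S u n) -> ell_is F u n (u + q)) /\
  (* (ii) *)
  (forall s : nat, 1 <= s <= q -> ell_is F (s * q) q (s * q + q)) /\
  (* (iii) *)
  (forall n : nat, 2 <= n ->
     (exists S : {set point F}, proj_arc S q.+1 n) -> ell_is F q.+1 n (2 * q.+1)) /\
  (* (iv) *)
  (~~ odd q -> forall n : nat, 2 <= n ->
     (exists S : {set point F}, proj_arc S q.+2 n) -> ell_is F q.+2 n (2 * q.+1)) /\
  (* (v) *)
  ell_is F (q ^ 2 - 2 * q + 1) q (q ^ 2 - 1) /\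
  (* (vi) *)
  (forall u : nat, q ^ 2 - 2 * q + 2 <= u <= q ^ 2 - q -> ell_is F u q (q ^ 2)) /\
  (* (vii) *)
  (forall u : nat, q ^ 2 - q + 1 <= u <= q ^ 2 -> ell_is F u q (q ^ 2 + q)).
Proof.
move=> q.
split; first by move=> n u hn hu _; exact: part1.
split; first by move=> s hs; exact: part2.
split; first by move=> n hn _; exact: part3.
split; first by move=> ev n hn _; exact: part4.
split; first by rewrite -mulnn; exact: part5.
split; first by move=> u; rewrite -mulnn; exact: part6.
by move=> u; rewrite -mulnn; exact: part7.
Qed.
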